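(* Let $r\geq 3$ be odd and let $2<m<n$ be integers. Put $$S=1+\sum_{k=1}^{(r-1)/2} n(m-1)^{k}(n-1)^{k-1}=1+n(m-1)+n(m-1)^2(n-1)+\cdots+n(m-1)^{\frac{r-1}{2}}(n-1)^{\frac{r-3}{2}},$$ and let $x$ be the smallest non-negative integer such that $(S+x)\cdot n$ is divisible by $m$. Then every $(m,n;2r)$-bipartite biregular cage has at least $(S+x)\left(1+\frac{n}{m}\right)$ vertices.
   Context: For integers $a,b\geq 2$ and even $g\ge 4$, an $(a,b;g)$-bipartite biregular graph is a finite simple bipartite graph of girth exactly $g$ in which all vertices of one bipartition class have degree $a$ and all vertices of the other class have degree $b$. An $(a,b;g)$-bipartite biregular cage is such a graph of minimum possible order. *)

(* Defs.v *)
From mathcomp Require Import all_boot all_order all_algebra.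
Set Implicit Arguments. Unset Strict Implicit. Unset Printing Implicit Defensive.
Import Order.TTheory GRing.Theory Num.Theory.

Definition simple_graph (T : finType) (e : rel T) : Prop :=
  symmetric e /\ irreflexive e.

Definition is_cycle (T : finType) (e : rel T) (c : seq T) : bool :=
  (2 < size c) && ucycleb e c.

Definition has_girth (T : finType) (e : rel T) (g : nat) : Prop :=
  (exists c, is_cycle e c /\ size c = g) /\
  (forall c, is_cycle e c -> g <= size c).

Definition deg (T : finType) (e : rel T) (v : T) : nat := #|[set w | e v w]|.

Definition bb_graph (a b g : nat) (T : finType) (e : rel T) : Prop :=
  simple_graph e /\
  (exists A : {set T},
     (forall u v, e u v -> (u \in A) != (v \in A)) /\
     (forall v, v \in A -> deg e v = a) /\
     (forall v, v \notin A -> deg e v = b)) /\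
  has_girth e g.

Definition bb_cage (a b g : nat) (T : finType) (e : rel T) : Prop :=
  bb_graph a b g e /\
  (forall (T' : finType) (e' : rel T'), bb_graph a b g e' -> #|T| <= #|T'|).

Definition S_bound (r m n : nat) : nat :=
  1 + \sum_(1 <= k < (r.-1)./2 + 1) n * (m - 1) ^ k * (n - 1) ^ (k - 1).

(* Main.v *)
Require Import Defs.
From mathcomp Require Import all_boot all_order all_algebra zify.
Import Order.TTheory GRing.Theory Num.Theory.
Set Implicit Arguments. Unset Strict Implicit.

Lemma extract (T : finType) (e : rel T) (hsym : symmetric e) (x : T) (p q : seq T) :
  path e x p -> path e x q -> uniq (x :: p) -> uniq (x :: q) ->
  last x p = last x q -> p != q ->
  exists c, is_cycle e c /\ size c <= size p + size q.
Proof.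
elim: p x q => [|y p' IH] x q.
  case: q => [|z q'] //= _ _ _ /andP[xq _] hl _.
  by move: (mem_last z q'); rewrite -hl (negbTE xq).
case: q => [|z q'].
  move=> _ _ /andP[xp _] _ /= hl _.
  by move: (mem_last y p'); rewrite hl (negbTE xp).
move=> hp hq up uq hl hne.
have [yz|yz] := eqVneq y z.
  subst z.
  move: hp hq up uq => /= /andP[_ hp] /andP[_ hq] /andP[_ up] /andP[_ uq].
  have hne' : p' != q' by apply: contra hne => /eqP ->.
  have [c [hc hs]] := IH y q' hp hq up uq hl hne'.
  exists c; split => //; rewrite /= addnS addSn; apply: leq_trans hs _.
  by rewrite leqW // leqnSn.
set P := y :: p' in hp up hl hne *; set Q := z :: q' in hq uq hl hne *.
have hPQ : has (mem Q) P.
  apply/hasP; exists (last x P); first by rewrite /P /= mem_last.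
  by rewrite hl /Q /= mem_last.
set i := find (mem Q) P.
have iP : i < size P by rewrite -has_find.
set a := nth x P i.
have aQ : a \in Q by exact: (nth_find x hPQ).
set j := index a Q.
have jQ : j < size Q by rewrite index_mem.
have naj : nth x Q j = a by rewrite nth_index.
move: up uq => /= /andP[xP uP] /andP[xQ uQ].
exists (x :: (take i.+1 P ++ rev (take j Q))); split; last first.
  rewrite /= size_cat size_rev !size_takel //; last exact: ltnW.
  by rewrite -addnS addSn; apply: leq_add.
rewrite /is_cycle; apply/andP; split.
  rewrite /= size_cat size_rev !size_takel //; last exact: ltnW.
  case: i iP @a aQ @j jQ naj => [|i'] iP a aQ j jQ naj; last by rewrite addSn.
  case: j jQ naj => [|j'] jQ naj; last by rewrite addnS.
  by move: naj; rewrite /a /= => yz'; rewrite yz' eqxx in yz.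
apply/andP; split.
  rewrite /cycle rcons_cat cat_path; apply/andP; split.
    exact: take_path.
  rewrite (take_nth x iP) last_rcons -/a -rev_cons -naj.
  have -> : nth x Q j = last x (take j.+1 Q) by rewrite (take_nth x jQ) last_rcons.
  have -> : x :: take j Q = belast x (take j.+1 Q) by rewrite (take_nth x jQ) belast_rcons.
  rewrite rev_path.
  have -> : path (fun z0 : T => e^~ z0) x (take j.+1 Q) = path e x (take j.+1 Q).
    by apply: eq_path => u w; rewrite hsym.
  exact: take_path.
rewrite cons_uniq mem_cat mem_rev negb_or cat_uniq rev_uniq !take_uniq // andbT.
apply/and3P; split.
- by apply/andP; split; [apply: contra xP => /mem_take | apply: contra xQ => /mem_take].
- by [].
apply/hasP => [[b]]; rewrite mem_rev => bQ bP.
move: bP; rewrite (take_nth x iP) mem_rcons inE => /orP[/eqP ba|].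
  subst b.
  have : uniq (take j Q ++ drop j Q) by rewrite cat_take_drop.
  rewrite cat_uniq => /and3P[_ /hasP hh _]; apply: hh.
  exists a => //; rewrite (drop_nth x jQ) naj mem_head //.
move=> /(nthP x) [k kl nk].
rewrite size_takel in kl; last exact: ltnW.
have := before_find x kl; rewrite -/i.
rewrite -nk nth_take // in bQ * => /negP; apply.
exact: mem_take bQ.
Qed.

Fixpoint Pk (T : finType) (e : rel T) (v : T) (k : nat) : seq (seq T) :=
  if k is k'.+1 then
    [seq w :: p | p <- Pk e v k', w <- enum [set w | e (head v p) w && (w \notin p)]]
  else [:: [:: v]].

Lemma Pk_inv (T : finType) (e : rel T) (hsym : symmetric e) (A : {set T})
  (hbip : forall u w, e u w -> (u \in A) != (w \in A)) (v : T) (vA : v \notin A)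
  k p : p \in Pk e v k ->
  exists u rest, p = u :: rest /\ [/\ path e u rest, uniq p, last u rest = v,
     size rest = k & (u \in A) = odd k].
Proof.
elim: k p => [|k IH] p /=.
  rewrite inE => /eqP ->; exists v, [::]; split => //; split => //; exact: negbTE.
move=> /allpairsPdep [q [w [hq hw ->]]].
have [u [rest [eq [hpath hu hl hs hA]]]] := IH q hq.
move: hw; rewrite mem_enum inE eq /= => /andP [euw wq].
exists w, (u :: rest); split => //; split => //=.
- by rewrite hsym euw.
- by apply/andP; split; [exact: wq | rewrite eq in hu].
- by rewrite hs.
- by move: (hbip u w euw); rewrite hA; case: (w \in A); case: (odd k).
Qed.

Lemma Pk_uniq (T : finType) (e : rel T) v k : uniq (Pk e v k).
Proof.
elim: k => [|k IH] //=.
apply: allpairs_uniq_dep => //.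
  by move=> p _; apply: enum_uniq.
move=> [p1 w1] [p2 w2] _ _ /= [-> ->] //.
Qed.

Lemma Pk_inj (T : finType) (e : rel T) (hsym : symmetric e) (A : {set T})
  (hbip : forall u w, e u w -> (u \in A) != (w \in A)) (v : T) (vA : v \notin A)
  (g : nat) (hg : forall c, is_cycle e c -> g <= size c)
  a b p q : a + b < g -> p \in Pk e v a -> q \in Pk e v b -> head v p = head v q -> p = q.
Proof.
move=> hab hp hq hh.
have [u [rp [ep [pp up lp sp _]]]] := Pk_inv hsym hbip vA hp.
have [u' [rq [eq [pq uq lq sq _]]]] := Pk_inv hsym hbip vA hq.
subst p q; move: hh => /= hh; subst u'.
case: (eqVneq rp rq) => [-> //|hne]; exfalso.
have [c [hc hs]] := extract hsym pp pq up uq (etrans lp (esym lq)) hne.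
have := hg c hc; rewrite leqNgt => /negP; apply.
by apply: leq_ltn_trans hs _; rewrite sp sq.
Qed.

Lemma Pk_nb (T : finType) (e : rel T) (hsym : symmetric e) (eirr : irreflexive e)
  (A : {set T})
  (hbip : forall u w, e u w -> (u \in A) != (w \in A)) (v : T) (vA : v \notin A)
  (g : nat) (hg : forall c, is_cycle e c -> g <= size c)
  k u rest w : k.+1 < g -> u :: rest \in Pk e v k -> e u w -> w \in u :: rest ->
  w = head u rest.
Proof.
move=> hk hp euw.
have [u' [rest' [eq [pp up lp sp _]]]] := Pk_inv hsym hbip vA hp.
case: eq => ? ?; subst u' rest'.
rewrite inE => /orP [/eqP wu|wr]; first by subst w; rewrite eirr in euw.
set j := index w rest.
have jr : j < size rest by rewrite index_mem.
have nj : nth u rest j = w by rewrite nth_index.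
case: j jr nj => [|j] jr nj; first by case: rest wr {hp pp up lp sp} jr nj.
exfalso.
have h1 : path e u [:: w] by rewrite /= euw.
have h2 : path e u (take j.+2 rest) by exact: take_path.
have h3 : uniq (u :: [:: w]).
  by rewrite /= inE andbT; apply/eqP => uw; rewrite -uw eirr in euw.
have h4 : uniq (u :: take j.+2 rest).
  by have := take_uniq j.+3 up.
have h5 : last u [:: w] = last u (take j.+2 rest).
  by rewrite (take_nth u jr) last_rcons nj.
have h6 : [:: w] != take j.+2 rest.
  by apply/eqP => /(congr1 size); rewrite size_takel.
have [c [hc hs]] := extract hsym h1 h2 h3 h4 h5 h6.
have := hg c hc; rewrite leqNgt => /negP; apply.
apply: leq_ltn_trans hs _; rewrite size_takel // /=; lia.
Qed.

Lemma sumn_ge (X : eqType) (s : seq X) (f : X -> nat) c :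
  (forall p, p \in s -> c <= f p) -> c * size s <= sumn (map f s).
Proof.
elim: s => [|x s IH] h /=; first by rewrite muln0.
rewrite mulnS; apply: leq_add; first by apply: h; rewrite mem_head.
by apply: IH => p ps; apply: h; rewrite inE ps orbT.
Qed.

Lemma Pk_sizeS (T : finType) (e : rel T) v k :
  size (Pk e v k.+1) =
  sumn [seq #|[set w | e (head v p) w && (w \notin p)]| | p <- Pk e v k].
Proof.
rewrite /= size_allpairs_dep; congr sumn; apply: eq_map => p.
by rewrite cardE.
Qed.

Lemma Pk_step (T : finType) (e : rel T) (hsym : symmetric e) (eirr : irreflexive e)
  (A : {set T})
  (hbip : forall u w, e u w -> (u \in A) != (w \in A)) (v : T) (vA : v \notin A)
  (g : nat) (hg : forall c, is_cycle e c -> g <= size c) (m n : nat)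
  (hdA : forall u, u \in A -> deg e u = m) (hdB : forall u, u \notin A -> deg e u = n)
  k : 0 < k -> k.+1 < g ->
  ((if odd k then m else n) - 1) * size (Pk e v k) <= size (Pk e v k.+1).
Proof.
move=> k0 hk; rewrite Pk_sizeS; apply: sumn_ge => p hp.
have [u [rest [ep [pp up lp sp hA]]]] := Pk_inv hsym hbip vA hp.
subst p => /=.
set S := [set w | e u w && (w \notin u :: rest)].
have -> : (if odd k then m else n) = deg e u.
  by case: (boolP (u \in A)) => uA; [rewrite hdA // -hA uA | rewrite hdB // -hA (negbTE uA)].
have hsub : [set w | e u w] \subset S :|: [set head u rest].
  apply/subsetP => w; rewrite inE => euw.
  rewrite in_setU in_set1 in_set euw /=.
  case: (boolP (w \in u :: rest)) => wp //=.
  by rewrite (Pk_nb hsym eirr hbip vA hg hk hp euw wp) eqxx.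
have := subset_leq_card hsub.
rewrite cardsU cards1 /deg => h.
have : #|[set w | e u w]| <= #|S| + 1 by apply: leq_trans h (leq_subr _ _).
lia.
Qed.

Lemma Pk_one (T : finType) (e : rel T) (eirr : irreflexive e) v :
  deg e v <= size (Pk e v 1).
Proof.
rewrite Pk_sizeS /= addn0; apply: subset_leq_card; apply/subsetP => w.
rewrite !inE => euw; rewrite euw /=.
by apply/eqP => wv; rewrite wv eirr in euw.
Qed.

Lemma Pk_size (T : finType) (e : rel T) v k p : p \in Pk e v k -> size p = k.+1.
Proof.
elim: k p => [|k IH] p /=; first by rewrite inE => /eqP ->.
by move=> /allpairsPdep [q [w [hq _ ->]]] /=; rewrite IH.
Qed.

Lemma Pk_even (T : finType) (e : rel T) (hsym : symmetric e) (eirr : irreflexive e)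
  (A : {set T})
  (hbip : forall u w, e u w -> (u \in A) != (w \in A)) (v : T) (vA : v \notin A)
  (g : nat) (hg : forall c, is_cycle e c -> g <= size c) (m n : nat)
  (hdA : forall u, u \in A -> deg e u = m) (hdB : forall u, u \notin A -> deg e u = n)
  j : 0 < j -> 2 * j < g ->
  n * (m - 1) ^ j * (n - 1) ^ (j - 1) <= size (Pk e v (2 * j)).
Proof.
have st := Pk_step hsym eirr hbip vA hg hdA hdB.
elim: j => [//|j IH] _ hj.
case: j IH hj => [|j] IH hj.
  have h1 := Pk_one eirr v; rewrite hdB // in h1.
  have h2 := st 1 isT hj; rewrite /= in h2.
  rewrite expn1 expn0 muln1 mulnC; apply: leq_trans h2.
  by rewrite leq_mul2l h1 orbT.
have hj' : 2 * j.+1 < g by lia.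
have h0 := IH isT hj'.
have s1 := st (2 * j.+1) ltac:(lia) ltac:(lia).
have s2 := st (2 * j.+1).+1 ltac:(lia) ltac:(lia).
rewrite oddM /= in s1. rewrite (_ : odd (2 * j.+1).+1 = true) in s2; last by rewrite -addn1 oddD oddM.
have -> : 2 * j.+2 = (2 * j.+1).+2 by lia.
apply: leq_trans s2; apply: leq_trans (leq_mul (leqnn (m - 1)) s1).
apply: leq_trans (leq_mul (leqnn (m - 1)) (leq_mul (leqnn (n - 1)) h0)).
rewrite !subSS !subn0 !expnS.
rewrite [X in X <= _](_ : _ = (m - 1) * ((n - 1) * (n * ((m - 1) * (m - 1) ^ j) * (n - 1) ^ j))) //.
by rewrite !mulnA; congr (_ * _); rewrite [LHS]mulnC !mulnA; congr (_ * _); rewrite mulnC !mulnA.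
Qed.

Fixpoint Lf (T : finType) (e : rel T) (v : T) (h : nat) : seq (seq T) :=
  if h is h'.+1 then Lf e v h' ++ Pk e v (2 * h) else Pk e v 0.

Lemma Lf_mem (T : finType) (e : rel T) v h p :
  p \in Lf e v h -> exists j, j <= h /\ p \in Pk e v (2 * j).
Proof.
elim: h => [|h IH] /=; first by move=> hp; exists 0.
rewrite mem_cat => /orP [/IH [j [jh hj]]|hp]; last by exists h.+1.
by exists j; split => //; apply: leqW.
Qed.

Lemma Lf_uniq (T : finType) (e : rel T) v h : uniq (Lf e v h).
Proof.
elim: h => [|h IH]; first by [].
change (uniq (Lf e v h ++ Pk e v (2 * h.+1))).
rewrite cat_uniq IH Pk_uniq andbT.
apply/hasP => [[p hp /Lf_mem [j [jh hj]]]].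
have := Pk_size hj; rewrite (Pk_size hp) => [[]]; lia.
Qed.

Lemma Lf_size (T : finType) (e : rel T) (hsym : symmetric e) (eirr : irreflexive e)
  (A : {set T})
  (hbip : forall u w, e u w -> (u \in A) != (w \in A)) (v : T) (vA : v \notin A)
  (g : nat) (hg : forall c, is_cycle e c -> g <= size c) (m n : nat)
  (hdA : forall u, u \in A -> deg e u = m) (hdB : forall u, u \notin A -> deg e u = n)
  h : 2 * h < g ->
  1 + \sum_(1 <= k < h + 1) n * (m - 1) ^ k * (n - 1) ^ (k - 1) <= size (Lf e v h).
Proof.
elim: h => [|h IH] hh; first by rewrite big_geq.
rewrite addn1 big_nat_recr //.
change (Lf e v h.+1) with (Lf e v h ++ Pk e v (2 * h.+1)).
rewrite size_cat addnA.
apply: leq_add; first by have := IH ltac:(lia); rewrite addn1.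
exact: (Pk_even hsym eirr hbip vA hg hdA hdB).
Qed.

Lemma Lf_card (T : finType) (e : rel T) (hsym : symmetric e)
  (A : {set T})
  (hbip : forall u w, e u w -> (u \in A) != (w \in A)) (v : T) (vA : v \notin A)
  (g : nat) (hg : forall c, is_cycle e c -> g <= size c)
  h : 4 * h < g -> size (Lf e v h) <= #|~: A|.
Proof.
move=> hh.
have hu : uniq (map (head v) (Lf e v h)).
  rewrite map_inj_in_uniq ?Lf_uniq // => p q /Lf_mem [a [ah ha]] /Lf_mem [b [bh hb]].
  apply: (Pk_inj hsym hbip vA hg _ ha hb); lia.
rewrite -(size_map (head v)) -(card_uniqP hu).
apply: subset_leq_card; apply/subsetP => u /mapP [p /Lf_mem [j [_ hj]] ->].
have [u' [rest [ep [_ _ _ _ hA]]]] := Pk_inv hsym hbip vA hj.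
by rewrite ep /= inE hA oddM.
Qed.

Lemma edge_count (T : finType) (e : rel T) (hsym : symmetric e) (A : {set T})
  (hbip : forall u w, e u w -> (u \in A) != (w \in A)) (m n : nat)
  (hdA : forall u, u \in A -> deg e u = m) (hdB : forall u, u \notin A -> deg e u = n) :
  #|A| * m = #|~: A| * n.
Proof.
have degs u : deg e u = \sum_w (e u w : nat).
  rewrite /deg -sum1dep_card big_mkcond /=; apply: eq_bigr => w _.
  by case: (e u w).
rewrite -!sum_nat_const.
transitivity (\sum_(a in A) \sum_w (e a w : nat)).
  by apply: eq_bigr => a aA; rewrite -(hdA a aA) degs.
rewrite exchange_big /= [RHS]big_mkcond /=; apply: eq_bigr => w _.
rewrite inE; case: (boolP (w \in A)) => wA /=.
  rewrite big1 // => a aA; case: (boolP (e a w)) => // eaw.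
  by move: (hbip a w eaw); rewrite aA wA.
rewrite -(hdB w wA) degs big_mkcond /=; apply: eq_bigr => a _.
case: (boolP (a \in A)) => aA; first by rewrite hsym.
case: (boolP (e w a)) => // ewa.
by move: (hbip w a ewa); rewrite (negbTE aA) (negbTE wA).
Qed.

Unset Implicit Arguments.

Theorem mainTheorem3 (r m n : nat) (hr3 : 3 <= r) (hrodd : odd r)
  (hm : 2 < m) (hmn : m < n) (x : nat)
  (hx : m %| (S_bound r m n + x) * n)
  (hxmin : forall y, y < x -> ~~ (m %| (S_bound r m n + y) * n))
  (T : finType) (e : rel T) (hcage : bb_cage m n (2 * r) e) :
  ((S_bound r m n + x)%:R * (1 + n%:R / m%:R) <= (#|T|%:R : rat))%R.
Proof.
move: hcage => [[[hsym eirr] [[A [hbip [hdA hdB]]] [[c0 [hc0 _]] hg]]] _].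
have [v vA] : exists v, v \notin A.
  move: hc0; rewrite /is_cycle; case: c0 => [|x0 [|y0 c0]] //= /andP [_ /andP [/andP [exy _] _]].
  case: (boolP (x0 \in A)) => x0A; last by exists x0.
  by exists y0; move: (hbip x0 y0 exy); rewrite x0A.
have hE := edge_count hsym hbip hdA hdB.
set B := #|~: A| in hE.
have hSB : S_bound r m n <= B.
  set h := (r.-1)./2.
  have hd := odd_double_half r.-1; rewrite -/h -muln2 in hd.
  apply: leq_trans (Lf_card hsym hbip vA hg (h := h) _); last lia.
  apply: (Lf_size hsym eirr hbip vA hg hdA hdB); lia.
have hdiv : m %| B * n by rewrite -hE dvdn_mull.
have hxB : S_bound r m n + x <= B.
  rewrite -leq_subRL //; rewrite leqNgt; apply/negP => hlt.
  by have := hxmin _ hlt; rewrite subnKC // hdiv.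
have m0 : (m%:R : rat) != 0%R by rewrite pnatr_eq0; lia.
have eA : (#|A|%:R : rat) = (B%:R * n%:R / m%:R)%R.
  have := congr1 (fun k => (k%:R : rat)) hE; rewrite /= !natrM => <-.
  by rewrite mulfK.
rewrite -(cardsC A) -/B (natrD _ #|A| B) eA.
have -> : (B%:R * n%:R / m%:R + B%:R : rat)%R = (B%:R * (1 + n%:R / m%:R))%R.
  by rewrite mulrDr mulr1 mulrA addrC.
apply: ler_wpM2r; last by rewrite ler_nat.
by rewrite addr_ge0 // divr_ge0.
Qed.
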